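(* Under the standing assumptions below: (i) if $f\in S_2$ then $\theta(f)$ is invertible with $\|\theta(f)^{-1}\|_{HS}<1.5$, and if $e\in S_0$ then $I-\theta(e)$ is invertible with $\|(I-\theta(e))^{-1}\|_{HS}<1.5$; (ii) if $e,f\in S_2$ then $ef\in S_2$; (iii) if $e\in S_0$ and $f\in S$ then $ef\in S_0$. In particular $S_2\cup S_0$ is a subsemigroup of $S$, and the map $\phi:S_2\cup S_0\to M_2(\mathbb C)$ with $\phi\equiv I$ on $S_2$ and $\phi\equiv0$ on $S_0$ is multiplicative.
   Context: Standing assumptions: $S$ is a semilattice (commutative semigroup of idempotents), $0\le\delta<0.03$, and $\theta:S\to M_2(\mathbb C)$ satisfies $\|\theta(e)\theta(f)-\theta(ef)\|_{HS}\le\delta$ for all $e,f\in S$, where $\|A\|_{HS}=(\operatorname{tr}(A^*A))^{1/2}$. For $k\in\{0,1,2\}$, $S_k=\{x\in S:\ |\operatorname{tr}\theta(x)-k|<0.95\}$; these sets are pairwise disjoint and cover $S$. *)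

(* Defs.v *)
(* Complex numbers are modelled by an arbitrary
   numeric algebraically closed field C (e.g. algC). *)
From HB Require Import structures.
From mathcomp Require Import all_boot all_order all_algebra.
Set Implicit Arguments. Unset Strict Implicit. Unset Printing Implicit Defensive.
Import Order.TTheory GRing.Theory Num.Theory.
Local Open Scope ring_scope.

Definition semilattice (S : Type) (mul : S -> S -> S) : Prop :=
  [/\ (forall x y z, mul x (mul y z) = mul (mul x y) z),
      (forall x y, mul x y = mul y x) &
      (forall x, mul x x = x)].

Definition hs (C : numClosedFieldType) (n : nat) (A : 'M[C]_n) : C :=
  sqrtC (\tr ((map_mx (fun z => z^*) A)^T *m A)).

Definition inS (C : numClosedFieldType) (S : Type) (theta : S -> 'M[C]_2)
  (k : nat) (x : S) : bool :=
  `|\tr (theta x) - k%:R| < 95%:R / 100%:R.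

Definition phi (C : numClosedFieldType) (S : Type) (theta : S -> 'M[C]_2)
  (x : S) : 'M[C]_2 :=
  if inS theta 2 x then 1%:M else 0.

(* Main.v *)
Require Import Defs.
From HB Require Import structures.
From mathcomp Require Import all_boot all_order all_algebra.
From mathcomp Require Import ring lra sesquilinear spectral.
Import Order.TTheory GRing.Theory Num.Theory.
Local Open Scope ring_scope.

(* The real numbers of C are packaged as a realFieldType RR C
   so that lra/nra can be used on norms. *)
Set Implicit Arguments. Unset Strict Implicit. Unset Printing Implicit Defensive.

Section RRdef.
Variable C : numClosedFieldType.
Definition RR := {x : C | x \is Num.real}.
HB.instance Definition _ := [isSub of RR for (@sval C (fun x => x \is Num.real))].
HB.instance Definition _ := [Choice of RR by <:].
HB.instance Definition _ := [SubChoice_isSubComUnitRing of RR by <:].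
HB.instance Definition _ := [SubChoice_isSubIntegralDomain of RR by <:].
HB.instance Definition _ := [SubIntegralDomain_isSubField of RR by <:].
Definition RRle (x y : RR) := val x <= val y.
Definition RRlt (x y : RR) := val x < val y.
Definition RRnorm (x : RR) : RR := exist _ `|val x| (normr_real (val x)).
Lemma RRle0_add x y : RRle 0 x -> RRle 0 y -> RRle 0 (x + y).
Proof. rewrite /RRle /=. by apply: addr_ge0. Qed.
Lemma RRle0_mul x y : RRle 0 x -> RRle 0 y -> RRle 0 (x * y).
Proof. rewrite /RRle /=. by apply: mulr_ge0. Qed.
Lemma RRle0_anti x : RRle 0 x -> RRle x 0 -> x = 0.
Proof. rewrite /RRle /= => h1 h2; apply: val_inj => /=. by apply/eqP; rewrite eq_le h1 h2. Qed.
Lemma RRsub_ge0 x y : RRle 0 (y - x) = RRle x y.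
Proof. by rewrite /RRle /= subr_ge0. Qed.
Lemma RRle0_total x : RRle 0 x || RRle x 0.
Proof. rewrite /RRle /=. case: x => x /= hx. by rewrite -realE. Qed.
Lemma RRnormN x : RRnorm (- x) = RRnorm x.
Proof. apply: val_inj => /=. by rewrite normrN. Qed.
Lemma RRge0_norm x : RRle 0 x -> RRnorm x = x.
Proof. rewrite /RRle => h; apply: val_inj => /=. by rewrite ger0_norm. Qed.
Lemma RRlt_def x y : RRlt x y = (y != x) && RRle x y.
Proof. by rewrite /RRlt /RRle lt_def. Qed.
HB.instance Definition _ := Num.IntegralDomain_isLeReal.Build RR RRle0_add RRle0_mul RRle0_anti RRsub_ge0 RRle0_total RRnormN RRge0_norm RRlt_def.
End RRdef.
Section Core.
Variable R : realFieldType.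
Lemma near01 (x y m : R) : 0 <= x -> 0 <= y -> 1 <= x + y -> x * y <= m -> m < 3/100 ->
  (x <= y -> 47/50 * x <= m) /\ (y <= x -> 47/50 * y <= m).
Proof.
move=> x0 y0 h hm m3; split=> hxy.
- have hy : 1/2 <= y by lra.
  have hx : x <= 6/100 by nra.
  nra.
- have hy : 1/2 <= x by lra.
  have hx : y <= 6/100 by nra.
  nra.
Qed.

Lemma sqr_lt (a : R) : 0 <= a -> a^+2 < (3/100)^+2 -> a < 3/100.
Proof. move=> h1 h2; nra. Qed.

Lemma sum_lt (a b : R) : 0 <= a -> 0 <= b -> a^+2 + b^+2 < (3/100)^+2 -> a + b < 2/43.
Proof. move=> h1 h2 h3. have : 0 <= (a - b)^+2 by apply: sqr_ge0. nra. Qed.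

Lemma final (x1 x2 G : R) : 30/31 <= x1 -> 30/31 <= x2 -> 0 <= G -> G <= 1/31 ->
  x1^+2 + G^+2 + x2^+2 < 9/4 * (x1^+2 * x2^+2).
Proof.
move=> h1 h2 h3 h4.
have q1 : 9/10 <= x1^+2 by nra.
have q2 : 9/10 <= x2^+2 by nra.
have q3 : G^+2 <= 1/900 by nra.
have r1 : x1^+2 * (9/10) <= x1^+2 * x2^+2 by apply: ler_wpM2l => //; apply: sqr_ge0.
have r2 : (9/10) * x2^+2 <= x1^+2 * x2^+2 by apply: ler_wpM2r => //; apply: sqr_ge0.
have r3 : 8/10 <= x1^+2 * x2^+2 by nra.
lra.
Qed.

Lemma core (x1 y1 x2 y2 G s tau dl : R) :
  0 <= x1 -> 0 <= y1 -> 0 <= x2 -> 0 <= y2 -> 0 <= G -> 0 <= s -> 0 <= dl ->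
  1 <= x1 + y1 -> 1 <= x2 + y2 ->
  1 - y1 - y2 <= s -> 1 - y1 - x2 <= tau -> 1 - x1 - y2 <= tau -> 2 - x1 - x2 <= tau ->
  (x1 * y1)^+2 + (G * s)^+2 + (x2 * y2)^+2 <= dl^+2 -> dl < 3/100 -> tau < 95/100 ->
  0 < x1 /\ 0 < x2 /\ x1^+2 + G^+2 + x2^+2 < 9/4 * (x1^+2 * x2^+2).
Proof.
move=> x10 y10 x20 y20 G0 s0 dl0 h1 h2 hs ha hb hc hd hdl ht.
set m1 := x1 * y1 in hd *; set m2 := x2 * y2 in hd *.
have m10 : 0 <= m1 by apply: mulr_ge0.
have m20 : 0 <= m2 by apply: mulr_ge0.
have hdl2 : dl^+2 < (3/100)^+2 by nra.
have g0 : 0 <= (G * s)^+2 by apply: sqr_ge0.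
have q0 : 0 <= m1^+2 by apply: sqr_ge0.
have q0' : 0 <= m2^+2 by apply: sqr_ge0.
have hm1 : m1 < 3/100 by apply: sqr_lt => //; lra.
have hm2 : m2 < 3/100 by apply: sqr_lt => //; lra.
have hsum : m1 + m2 < 2/43 by apply: sum_lt => //; lra.
have [c1 c1'] := @near01 x1 y1 m1 x10 y10 h1 (lexx _) hm1.
have [c2 c2'] := @near01 x2 y2 m2 x20 y20 h2 (lexx _) hm2.
have [l1|l1] := leP x1 y1; have [l2|l2] := leP x2 y2.
- have := c1 l1; have := c2 l2. lra.
- have := c1 l1; have := c2' (ltW l2). lra.
- have := c1' (ltW l1); have := c2 l2. lra.
have e1 := c1' (ltW l1); have e2 := c2' (ltW l2).
have hy1 : y1 <= 1/31 by lra.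
have hy2 : y2 <= 1/31 by lra.
have hx1 : 30/31 <= x1 by lra.
have hx2 : 30/31 <= x2 by lra.
have hs' : 29/31 <= s by lra.
have gs : G * s < 3/100 by apply: sqr_lt; rewrite ?mulr_ge0 //; lra.
have hGs : G * (29/31) <= G * s by apply: ler_wpM2l.
have hG : G <= 1/31 by lra.
split; first lra. split; first lra.
by apply: final.
Qed.
End Core.
Section Mat.
Variable C : numClosedFieldType.
Local Notation M2 := 'M[C]_2.
Definition n2 (M : M2) : C := `|M ord0 ord0|^+2 + `|M ord0 ord_max|^+2 + `|M ord_max ord0|^+2 + `|M ord_max ord_max|^+2.
Definition ct (M : M2) : M2 := (map_mx (fun z => z^*) M)^T.

Lemma sum2 (F : 'I_2 -> C) : \sum_(i < 2) F i = F ord0 + F ord_max.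
Proof. rewrite big_ord_recr big_ord1; congr (F _ + F _); exact: val_inj. Qed.

Lemma ord2P (i : 'I_2) : i = ord0 \/ i = ord_max.
Proof. by case: i => [[|[|//]]] H; [left|right]; apply: val_inj. Qed.

Lemma trctE (M : M2) : \tr (ct M *m M) = n2 M.
Proof.
rewrite /mxtrace sum2 !mxE !sum2 !mxE /n2 !normCK.
rewrite [M ord0 ord0 * _]mulrC [M ord0 ord_max * _]mulrC [M ord_max ord0 * _]mulrC [M ord_max ord_max * _]mulrC.
ring.
Qed.

Lemma hsE (M : M2) : hs M = sqrtC (n2 M).
Proof. by rewrite /hs -trctE. Qed.

Lemma ctM (A B : M2) : ct (A *m B) = ct B *m ct A.
Proof. by rewrite /ct map_mxM trmx_mul. Qed.

Lemma ctK (A : M2) : ct (ct A) = A.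
Proof. by apply/matrixP => i j; rewrite !mxE conjCK. Qed.
End Mat.
Section RRaux.
Variable C : numClosedFieldType.
Definition RRof (z : C) : RR C := locked (exist _ `|z| (normr_real z) : RR C).
Lemma RRleE (a b : RR C) : (a <= b) = (val a <= val b). Proof. by []. Qed.
Lemma RRltE (a b : RR C) : (a < b) = (val a < val b). Proof. by []. Qed.
Lemma RRofE z : val (RRof z) = `|z|. Proof. by rewrite /RRof -lock. Qed.
End RRaux.

Unset Implicit Arguments.

Section L1.
Variable C : numClosedFieldType.
Import Num.Def.
Local Open Scope sesquilinear_scope.
Local Notation M2 := 'M[C]_2.

Lemma ctE (P : M2) : P ^t* = ct P.
Proof. by apply/matrixP => i j; rewrite !mxE. Qed.

Lemma n2U (P M : M2) : P *m ct P = 1%:M -> ct P *m P = 1%:M -> n2 (P *m M *m ct P) = n2 M.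
Proof.
move=> h1 h2; rewrite -!trctE !ctM ctK.
rewrite -!mulmxA (mulmxA (ct P) P) h2 mul1mx.
by rewrite mxtrace_mulC -!mulmxA h2 mulmx1.
Qed.

Lemma n2_ge0 (M : M2) : 0 <= n2 M.
Proof. by rewrite /n2 !addr_ge0 // exprn_ge0. Qed.

Lemma tri (b c d : C) : `|b + c + d| <= `|b| + `|c| + `|d|.
Proof. by rewrite (le_trans (ler_normD _ _)) // lerD2r ler_normD. Qed.

Lemma trisub (u b c d : C) : u = b - c - d -> `|u| - `|c| - `|d| <= `|b|.
Proof.
move=> ->; rewrite !lerBlDr; apply: (le_trans (tri b (-c) (-d))).
by rewrite !normrN addrAC.
Qed.

Lemma lt_congr (x y x' y' : C) : x = x' -> y = y' -> x' < y' -> x < y.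
Proof. by move=> -> ->. Qed.

Lemma mx2_ext (M N : M2) : M ord0 ord0 = N ord0 ord0 -> M ord0 ord_max = N ord0 ord_max ->
  M ord_max ord0 = N ord_max ord0 -> M ord_max ord_max = N ord_max ord_max -> M = N.
Proof.
move=> h1 h2 h3 h4; apply/matrixP => i j.
by case: (ord2P i) => ->; case: (ord2P j) => ->.
Qed.


Lemma inv_final (R : realFieldType) (x1 x2 G : R) : 0 < x1 -> 0 < x2 ->
  x1^+2 + G^+2 + x2^+2 < 9/4 * (x1^+2 * x2^+2) ->
  x1^-1^+2 + 0^+2 + (G * (x1 * x2)^-1)^+2 + x2^-1^+2 < (3/2)^+2.
Proof.
move=> h1 h2 h.
have p : 0 < x1^+2 * x2^+2 by rewrite mulr_gt0 // exprn_gt0.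
have -> : x1^-1^+2 + 0^+2 + (G * (x1 * x2)^-1)^+2 + x2^-1^+2 =
  (x1^+2 + G^+2 + x2^+2) / (x1^+2 * x2^+2).
  by field; rewrite ?gt_eqF.
rewrite ltr_pdivrMr //.
by apply: (lt_le_trans h); rewrite ler_pM2r //; lra.
Qed.

Ltac tr := rewrite ?RRleE ?RRltE ?RRofE /= ?(RRofE, rmorphD, rmorphB, rmorphN, rmorphM, rmorphXn, rmorph1, rmorph0, rmorph_nat, fmorphV) /=.

Lemma L1 (A : M2) (dl : C) : 0 <= dl -> dl < 3%:R / 100%:R ->
  hs (A *m A - A) <= dl -> `|\tr A - 2%:R| < 95%:R / 100%:R ->
  A \in unitmx /\ hs (invmx A) < 3%:R / 2%:R.
Proof.
move=> dl0 dl3 hE htr.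
have [P Pu] := @Schur C 2 A isT.
rewrite /similar_to conjymx // ctE => Ttrig.
have h1 : P *m ct P = 1%:M by rewrite -ctE; apply/unitarymxP.
have h2 : ct P *m P = 1%:M.
  by have := @mulmxKtV C 2 2 2 1%:M P Pu erefl; rewrite mul1mx ctE.
set T := P *m A *m ct P in Ttrig.
have T01 : T ord0 ord_max = 0 by move/is_trig_mxP: Ttrig; apply.
have hA : A = ct P *m T *m P by rewrite /T !mulmxA h2 mul1mx -mulmxA h2 mulmx1.
have hET : n2 (T *m T - T) = n2 (A *m A - A).
  rewrite -(n2U P (A *m A - A) h1 h2); congr n2.
  rewrite mulmxBr mulmxBl; congr (_ - _).
  by rewrite /T !mulmxA -[P *m A *m ct P *m P]mulmxA h2 mulmx1.
have trT : \tr T = \tr A by rewrite /T mxtrace_mulC mulmxA h2 mul1mx.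
clearbody T.
have hn : n2 (A *m A - A) <= dl^+2.
  rewrite hsE in hE.
  have : sqrtC (n2 (A *m A - A)) <= sqrtC (dl^+2) by rewrite sqrCK.
  by rewrite ler_sqrtC // ?nnegrE ?n2_ge0 ?exprn_ge0.
have e00 : (T *m T - T) ord0 ord0 = T ord0 ord0 * (T ord0 ord0 - 1).
 by rewrite !mxE sum2 T01; ring.
have e01 : (T *m T - T) ord0 ord_max = 0 by rewrite !mxE sum2 ?T01; ring.
have e10 : (T *m T - T) ord_max ord0 = T ord_max ord0 * (T ord0 ord0 + T ord_max ord_max - 1) by rewrite !mxE sum2 ?T01; ring.
have e11 : (T *m T - T) ord_max ord_max = T ord_max ord_max * (T ord_max ord_max - 1) by rewrite !mxE sum2 ?T01; ring.
rewrite -hET /n2 e00 e01 e10 e11 !normrM normr0 expr0n /= addr0 in hn.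
have trE : \tr T = T ord0 ord0 + T ord_max ord_max by rewrite /mxtrace sum2.
rewrite -trT trE in htr.
set a := T ord0 ord0 in hn htr *.
set b := T ord_max ord0 in hn htr *.
set d := T ord_max ord_max in hn htr *.
pose dR : RR C := exist _ dl (ger0_real dl0).
have [q1 [q2 q3]] : (0 < RRof a) /\ (0 < RRof d) /\
   (RRof a ^+ 2 + RRof b ^+2 + RRof d ^+ 2 < 9/4 * (RRof a ^+2 * RRof d ^+2)).
  apply: (@core _ _ (RRof (a - 1)) _ (RRof (d - 1)) _ (RRof (a + d - 1)) (RRof (a + d - 2)) dR); tr;
   rewrite ?normr_ge0 //.
  - apply: (le_trans _ (ler_normB a (a - 1))).
    by rewrite (_ : a - (a - 1) = 1) ?normr1 //; ring.
  - apply: (le_trans _ (ler_normB d (d - 1))).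
    by rewrite (_ : d - (d - 1) = 1) ?normr1 //; ring.
  - by have := trisub (1) (a + d - 1) (a - 1) (d - 1); rewrite normr1; apply; ring.
  - by have := trisub (-1) (a + d - 2) (a - 1) (d); rewrite normrN normr1; apply; ring.
  - by have := trisub (-1) (a + d - 2) (a) (d - 1); rewrite normrN normr1; apply; ring.
  - have := trisub (-(1+1)) (a + d - 2) (a) (d); rewrite normrN (@ger0_norm _ (1+1)); last by rewrite addr_ge0 ?ler01.
    by apply; ring.
have := @inv_final _ _ _ _ q1 q2 q3.
rewrite RRltE ?(rmorphD, rmorphB, rmorphN, rmorphM, rmorphXn, rmorph1, rmorph0, rmorph_nat, fmorphV, fmorph_div) /= ?RRofE => hfin.
move: q1 q2 q3; tr => q1 q2 q3.
have a0 : a != 0 by rewrite -normr_gt0.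
have d0 : d != 0 by rewrite -normr_gt0.
pose Mi : M2 := \matrix_(i, j) (if i == ord0 then (if j == ord0 then a^-1 else 0)
   else (if j == ord0 then - (b / (a * d)) else d^-1)).
have hTM : T *m Mi = 1%:M.
  apply: mx2_ext; rewrite !mxE sum2 ?mxE /= ?T01 -/a -/b -/d; field; by rewrite ?a0 ?d0.

have hAM : A *m (ct P *m Mi *m P) = 1%:M.
  by rewrite hA -!mulmxA (mulmxA P) h1 mul1mx (mulmxA T) hTM mul1mx h2.
have [Au _] := mulmx1_unit hAM.
have hinv : invmx A = ct P *m Mi *m P.
  by rewrite -[invmx A]mulmx1 -hAM (mulmxA (invmx A)) mulVmx // mul1mx.
split => //; rewrite hinv hsE.
have -> : n2 (ct P *m Mi *m P) = n2 Mi by rewrite -{2}(ctK P) n2U // ctK.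
have -> : n2 Mi = `|a|^-1^+2 + 0^+2 + (`|b| * (`|a| * `|d|)^-1)^+2 + `|d|^-1^+2.
  by rewrite /n2 !mxE /= normr0 normrN normrM !normfV normrM.
rewrite -(@sqrCK _ (3/2)); last by rewrite divr_ge0 ?ler0n.
rewrite ltr_sqrtC ?nnegrE.
- apply: (@lt_congr _ _ _ _ _ _ hfin); field; by rewrite ?normr_eq0 ?a0 ?d0.
- by do ![apply: addr_ge0]; apply: exprn_ge0; rewrite ?invr_ge0 // divr_ge0 // mulr_ge0.
- by rewrite exprn_ge0 // divr_ge0 ?ler0n.
Qed.
End L1.


Section Aux.
Variable C : numClosedFieldType.
Import Num.Def.
Local Notation M2 := 'M[C]_2.

Lemma le4 (x y z w : C) : 0 <= x -> 0 <= y -> 0 <= z -> 0 <= w ->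
  [/\ x <= x+y+z+w, y <= x+y+z+w, z <= x+y+z+w & w <= x+y+z+w].
Proof.
move=> hx hy hz hw; split.
- by rewrite -!addrA lerDl !addr_ge0.
- by rewrite (addrC x y) -!addrA lerDl !addr_ge0.
- by rewrite (addrAC x y z) (addrC x z) -!addrA lerDl !addr_ge0.
- by rewrite lerDr !addr_ge0.
Qed.

Lemma sq_le_n2 (M : M2) i j : `|M i j|^+2 <= n2 M.
Proof.
have h := fun x : C => exprn_ge0 2 (normr_ge0 x).
have [h1 h2 h3 h4] := le4 _ _ _ _ (h (M ord0 ord0)) (h (M ord0 ord_max)) (h (M ord_max ord0)) (h (M ord_max ord_max)).
by rewrite /n2; case: (ord2P i) => ->; case: (ord2P j) => ->.
Qed.

Lemma entry_le (M : M2) i j : `|M i j| <= hs M.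
Proof.
rewrite hsE -(sqrCK (normr_ge0 (M i j))) ler_sqrtC ?nnegrE ?exprn_ge0 ?n2_ge0 //.
exact: sq_le_n2.
Qed.

Lemma prod_le (M N : M2) (a b : C) i j : (forall i j, `|M i j| <= a) ->
  (forall i j, `|N i j| <= b) -> `|(M *m N) i j| <= a * b + a * b.
Proof.
move=> hM hN; rewrite !mxE sum2; apply: le_trans (ler_normD _ _) _.
by apply: lerD; rewrite normrM; apply: ler_pM.
Qed.
End Aux.


Lemma numA (R : realFieldType) (d e : R) : 0 <= d -> d < 3%:R / 100%:R -> e = 3%:R / 2%:R * d + 3%:R / 2%:R * d ->
  e + e + (e + e) + (e * e + e * e + (e * e + e * e)) + (d + d) < 95%:R / 100%:R.
Proof.
move=> h1 h2 he.
have e0 : 0 <= e by lra.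
have e1 : e < 9%:R / 100%:R by lra.
have e2 : e * e <= 9%:R / 100%:R * e by apply: ler_wpM2r => //; lra.
lra.
Qed.

Lemma numB (R : realFieldType) (d e : R) : 0 <= d -> d < 3%:R / 100%:R -> e = 3%:R / 2%:R * d + 3%:R / 2%:R * d ->
  e + e < 95%:R / 100%:R.
Proof. move=> h1 h2 he. lra. Qed.

Lemma numC (R : realFieldType) (x y : R) : x < 95%:R / 100%:R -> y < 95%:R / 100%:R -> 2%:R <= x + y -> False.
Proof. move=> *; lra. Qed.

Section Main.
Variable C : numClosedFieldType.
Local Notation M2 := 'M[C]_2.

Lemma vN (n : nat) : val (n%:R : RR C) = n%:R. Proof. exact: rmorph_nat. Qed.
Lemma vD (x y : RR C) : val (x + y) = val x + val y. Proof. exact: rmorphD. Qed.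
Lemma vB (x y : RR C) : val (x - y) = val x - val y. Proof. exact: rmorphB. Qed.
Lemma vM (x y : RR C) : val (x * y) = val x * val y. Proof. exact: rmorphM. Qed.
Lemma vV (x : RR C) : val (x^-1) = (val x)^-1. Proof. exact: fmorphV. Qed.
Lemma RRlt_val (a b : RR C) : a < b -> val a < val b. Proof. by []. Qed.
Ltac tr2 := rewrite ?RRleE ?RRltE ?(vD, vB, vM, vV, RRofE) ?vN.

Lemma nD2 (x y a b : C) : `|x| <= a -> `|y| <= b -> `|x + y| <= a + b.
Proof. by move=> h1 h2; apply: le_trans (ler_normD _ _) _; apply: lerD. Qed.
Lemma nB2 (x y a b : C) : `|x| <= a -> `|y| <= b -> `|x - y| <= a + b.
Proof. by move=> h1 h2; apply: le_trans (ler_normB _ _) _; apply: lerD. Qed.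

Lemma val_lt (a b : RR C) : val a < val b -> a < b. Proof. by []. Qed.
Lemma val_le (a b : RR C) : val a <= val b -> a <= b. Proof. by []. Qed.
Lemma v0 : val (0 : RR C) = 0. Proof. by []. Qed.

Lemma disj (t : C) : `|t - 2%:R| < 95%:R / 100%:R -> `|t - 0%:R| < 95%:R/100%:R -> False.
Proof.
move=> h1 h2.
have h3 : 2%:R <= `|t - 0%:R| + `|t - 2%:R|.
  apply: le_trans (ler_normB _ _); rewrite (_ : t - 0%:R - (t - 2%:R) = 2%:R); last by ring.
  by rewrite ger0_norm ?ler0n.
have K := @numC _ (RRof (t - 0%:R)) (RRof (t - 2%:R)).
apply: K.
- apply: val_lt. by rewrite RRofE vM vV !vN.
- apply: val_lt. by rewrite RRofE vM vV !vN.
- apply: val_le. by rewrite vN vD !RRofE.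
Qed.

Lemma numA_C (d e : C) : 0 <= d -> d < 3%:R / 100%:R -> e = 3%:R / 2%:R * d + 3%:R / 2%:R * d ->
  e + e + (e + e) + (e * e + e * e + (e * e + e * e)) + (d + d) < 95%:R / 100%:R.
Proof.
move=> h1 h2 ->.
have K := @numA _ (RRof d) (3%:R / 2%:R * RRof d + 3%:R / 2%:R * RRof d).
have h1' : 0 <= RRof d by apply: val_le; rewrite v0 RRofE.
have h2' : RRof d < 3%:R / 100%:R by apply: val_lt; rewrite RRofE vM vV !vN ger0_norm.
have H := RRlt_val _ _ (K h1' h2' erefl).
rewrite !(vN, vD, vM, vV) !RRofE (ger0_norm h1) in H. exact H.
Qed.

Lemma numB_C (d e : C) : 0 <= d -> d < 3%:R / 100%:R -> e = 3%:R / 2%:R * d + 3%:R / 2%:R * d ->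
  e + e < 95%:R / 100%:R.
Proof.
move=> h1 h2 ->.
have K := @numB _ (RRof d) (3%:R / 2%:R * RRof d + 3%:R / 2%:R * RRof d).
have h1' : 0 <= RRof d by apply: val_le; rewrite v0 RRofE.
have h2' : RRof d < 3%:R / 100%:R by apply: val_lt; rewrite RRofE vM vV !vN ger0_norm.
have H := RRlt_val _ _ (K h1' h2' erefl).
by rewrite !(vN, vD, vM, vV) !RRofE (ger0_norm h1) in H.
Qed.
End Main.

Theorem propositionp (C : numClosedFieldType) (S : Type) (mul : S -> S -> S)
  (theta : S -> 'M[C]_2) (delta : C) :
  semilattice mul ->
  0 <= delta -> delta < 3%:R / 100%:R ->
  (forall e f : S, hs (theta e *m theta f - theta (mul e f)) <= delta) ->
  ((forall f, inS theta 2 f ->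
         theta f \in unitmx /\ hs (invmx (theta f)) < 3%:R / 2%:R) /\
      (forall e, inS theta 0 e ->
         (1%:M - theta e) \in unitmx /\ hs (invmx (1%:M - theta e)) < 3%:R / 2%:R) /\
      (forall e f, inS theta 2 e -> inS theta 2 f -> inS theta 2 (mul e f)) /\
      (forall e f, inS theta 0 e -> inS theta 0 (mul e f)) /\
      (forall e f, inS theta 2 e || inS theta 0 e -> inS theta 2 f || inS theta 0 f ->
         inS theta 2 (mul e f) || inS theta 0 (mul e f)) /\
      (forall e f, inS theta 2 e || inS theta 0 e -> inS theta 2 f || inS theta 0 f ->
         phi theta (mul e f) = phi theta e *m phi theta f)).
Proof.
move=> [hAs hCo hId] d0 d3 H.
have hI : forall e, hs (theta e *m theta e - theta e) <= delta.
  by move=> e; have := H e e; rewrite hId.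
have P2 : forall f, inS theta 2 f ->
    theta f \in unitmx /\ hs (invmx (theta f)) < 3%:R / 2%:R.
  by move=> f hf; apply: (@L1 C (theta f) delta d0 d3 (hI f) hf).
have P0 : forall e, inS theta 0 e ->
    (1%:M - theta e) \in unitmx /\ hs (invmx (1%:M - theta e)) < 3%:R / 2%:R.
  move=> e he; apply: (@L1 C _ delta d0 d3).
  - have -> : (1%:M - theta e) *m (1%:M - theta e) - (1%:M - theta e) = theta e *m theta e - theta e.
      apply/matrixP => i j; rewrite !mxE !sum2 !mxE.
      by case: (ord2P i) => ->; case: (ord2P j) => -> /=; ring.
    exact: hI.
  - rewrite (_ : \tr (1%:M - theta e) - 2%:R = - (\tr (theta e) - 0%:R)) ?normrN //.
    by rewrite /mxtrace !sum2 !mxE /=; ring.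
pose eps := 3%:R / 2%:R * delta + 3%:R / 2%:R * delta.
have bInv : forall (A : 'M[C]_2), A \in unitmx -> hs (invmx A) < 3%:R / 2%:R ->
    hs (A *m A - A) <= delta -> forall i j, `|(A - 1%:M) i j| <= eps.
  move=> A Au Ai hAA i j.
  have -> : A - 1%:M = invmx A *m (A *m A - A) by rewrite mulmxBr mulKmx // mulVmx.
  apply: prod_le => k l.
  - exact: (le_trans (entry_le _ _ _ _)) (ltW Ai).
  - exact: (le_trans (entry_le _ _ _ _)) hAA.
have P22 : forall e f, inS theta 2 e -> inS theta 2 f -> inS theta 2 (mul e f).
  move=> e f he hf.
  have [Au Ai] := P2 e he; have [Bu Bi] := P2 f hf.
  have bP := bInv _ Au Ai (hI e); have bQ := bInv _ Bu Bi (hI f).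
  have bPQ := fun i j => @prod_le C _ _ _ _ i j bP bQ.
  have bE : forall i j, `|(theta e *m theta f - theta (mul e f)) i j| <= delta.
    by move=> i j; apply: le_trans (entry_le _ _ _ _) (H e f).
  rewrite /inS.
  have -> : \tr (theta (mul e f)) - 2%:R =
     (theta e - 1%:M) ord0 ord0 + (theta e - 1%:M) ord_max ord_max +
     ((theta f - 1%:M) ord0 ord0 + (theta f - 1%:M) ord_max ord_max) +
     (((theta e - 1%:M) *m (theta f - 1%:M)) ord0 ord0 + ((theta e - 1%:M) *m (theta f - 1%:M)) ord_max ord_max) -
     ((theta e *m theta f - theta (mul e f)) ord0 ord0 + (theta e *m theta f - theta (mul e f)) ord_max ord_max).
    by rewrite /mxtrace !sum2 !mxE !sum2 !mxE /=; ring.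
  apply: le_lt_trans (@numA_C C _ _ d0 d3 (erefl eps)).
  apply: nB2; last by apply: nD2.
  apply: nD2; first apply: nD2; try apply: nD2; by [].
have P00 : forall e f, inS theta 0 e -> inS theta 0 (mul e f).
  move=> e f he.
  have [Bu Bi] := P0 e he.
  have hX : theta (mul e f) = invmx (1%:M - theta e) *m
       (- (theta e *m theta (mul e f) - theta (mul e (mul e f)))).
    rewrite hAs hId -{1}(mulKmx Bu (theta (mul e f))); congr (_ *m _).
    by rewrite mulmxBl mul1mx opprB.
  have bX : forall i j, `|theta (mul e f) i j| <= eps.
    move=> i j; rewrite hX; apply: prod_le => k l.
    - exact: (le_trans (entry_le _ _ _ _)) (ltW Bi).
    - by rewrite mxE normrN; apply: le_trans (entry_le _ _ _ _) (H e (mul e f)).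
  rewrite /inS subr0 /mxtrace sum2.
  apply: le_lt_trans (@numB_C C _ _ d0 d3 (erefl eps)).
  by apply: nD2.
have dj : forall x, inS theta 2 x -> inS theta 0 x -> False.
  by move=> x; apply: disj.
do 4 (split => //).
split.
  move=> e f /orP[he|he] /orP[hf|hf].
  - by rewrite P22.
  - by rewrite hCo P00 ?orbT.
  - by rewrite P00 ?orbT.
  - by rewrite P00 ?orbT.
move=> e f /orP[he|he] /orP[hf|hf]; rewrite /phi.
- by rewrite he hf P22 // mul1mx.
- have h0 : inS theta 0 (mul e f) by rewrite hCo P00.
  have -> : inS theta 2 (mul e f) = false by apply/negP => h; exact: dj _ h h0.
  have -> : inS theta 2 f = false by apply/negP => h; exact: dj _ h hf.
  by rewrite mulmx0.
- have h0 : inS theta 0 (mul e f) by rewrite P00.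
  have -> : inS theta 2 (mul e f) = false by apply/negP => h; exact: dj _ h h0.
  have -> : inS theta 2 e = false by apply/negP => h; exact: dj _ h he.
  by rewrite mul0mx.
- have h0 : inS theta 0 (mul e f) by rewrite P00.
  have -> : inS theta 2 (mul e f) = false by apply/negP => h; exact: dj _ h h0.
  have -> : inS theta 2 e = false by apply/negP => h; exact: dj _ h he.
  by rewrite mul0mx.
Qed.
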